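(* Let $p$ be an odd prime and $\chi$ a primitive Dirichlet character with odd conductor $f$. For every integer $n\ge0$, in $\mathbb Q_p(\chi)$, $$(1-\chi(p)p^n)E_{n,\chi}=\lim_{N\to\infty}\sum_{\substack{a=1\\ p\nmid a}}^{fp^N}(-1)^a\chi(a)a^n .$$
   Context: We set $\chi(a)=0$ if $a$ is not prime to $f$. The generalized Euler numbers are defined by $2\sum_{a=1}^{f}\frac{(-1)^a\chi(a)e^{at}}{e^{ft}+1}=\sum_{n\ge0}E_{n,\chi}\frac{t^n}{n!}$, viewed in $\mathbb Q_p(\chi)$, the field generated over $\mathbb Q_p$ by the values of $\chi$. *)

(* Defs.v *)
From HB Require Import structures.
From mathcomp Require Import all_boot all_order all_algebra all_field.
Set Implicit Arguments. Unset Strict Implicit. Unset Printing Implicit Defensive.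
Import Order.TTheory GRing.Theory Num.Theory.
Local Open Scope ring_scope.

Definition dirichlet_char (f : nat) (chi : nat -> algC) : Prop :=
  [/\ chi 1%N = 1,
      (forall m n : nat, chi (m * n)%N = chi m * chi n),
      (forall a : nat, chi (a + f)%N = chi a) &
      (forall a : nat, (chi a != 0) = coprime a f)].

(* Primitive: not induced by a character of a smaller modulus d | f. *)
Definition primitive_char (f : nat) (chi : nat -> algC) : Prop :=
  dirichlet_char f chi /\
  forall d : nat, (d %| f)%N -> (d < f)%N ->
    exists a b : nat,
      [/\ coprime a f, coprime b f, a = b %[mod d] & chi a != chi b].

(* E is the sequence of generalized Euler numbers: coefficientwise form of
   (e^{ft}+1) * sum_n E n t^n/n! = 2 sum_{a=1}^f (-1)^a chi(a) e^{at}. *)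
Definition gen_euler (f : nat) (chi : nat -> algC) (E : nat -> algC) : Prop :=
  forall n : nat,
    \sum_(k < n.+1) ('C(n, k))%:R * (f%:R) ^+ (n - k) * E k + E n =
    2 * \sum_(1 <= a < f.+1) (-1) ^+ a * chi a * (a%:R) ^+ n.

(* x is integral at every prime above p. *)
Definition p_integral (p : nat) (x : algC) : Prop :=
  exists m : nat, coprime m p /\ (m%:R * x \in Aint).

(* p-adic convergence (at every prime above p) of u to L. *)
Definition padic_lim (p : nat) (u : nat -> algC) (L : algC) : Prop :=
  forall k : nat, exists N0 : nat, forall N : nat, (N0 <= N)%N ->
    p_integral p ((u N - L) / (p%:R) ^+ k).

(* Main.v *)
Require Import Defs.
From HB Require Import structures.
From mathcomp Require Import all_boot all_order all_algebra all_field.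
From mathcomp Require Import cyclic ring zify.
Import Order.TTheory GRing.Theory Num.Theory.
Set Implicit Arguments. Unset Strict Implicit.
Local Open Scope ring_scope.


Section Chi.
Variables (f : nat) (chi : nat -> algC).
Hypothesis hchi : dirichlet_char f chi.

Lemma chi_per a q : chi (a + q * f)%N = chi a.
Proof.
have [_ _ hp _] := hchi; elim: q => [|q IH]; first by rewrite mul0n addn0.
by rewrite mulSn addnCA addnC hp IH.
Qed.

Lemma chi_mod a : chi a = chi (a %% f).
Proof. by rewrite {1}(divn_eq a f) addnC chi_per. Qed.

Lemma chi_exp a k : chi (a ^ k)%N = chi a ^+ k.
Proof.
have [h1 hm _ _] := hchi; elim: k => [|k IH]; first by rewrite expn0 h1.
by rewrite expnS hm IH exprS.
Qed.

Lemma chi_Aint a : chi a \in Aint.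
Proof.
have [h1 hm hp hz] := hchi.
have [c0|cn0] := eqVneq (chi a) 0; first by rewrite c0 rpred0.
have cop : coprime a f by rewrite -hz.
have [f0|fpos] := posnP f.
  by move: cop; rewrite f0 /coprime gcdn0 => /eqP ->; rewrite h1 rpred1.
apply: (@Aint_unity_root (totient f)); first by rewrite totient_gt0.
rewrite unity_rootE -chi_exp (chi_mod (a ^ totient f)) (Euler_exp_totient cop) -chi_mod h1.
by [].
Qed.
End Chi.

Definition pint p x := p_integral p x.

Section PInt.
Variable p : nat.
Lemma pint_Aint x : x \in Aint -> p_integral p x.
Proof. by move=> h; exists 1%N; rewrite coprime1n mul1r. Qed.
Lemma pint_nat (m : nat) : p_integral p m%:R.
Proof. by apply: pint_Aint; rewrite rpred_nat. Qed.
Lemma pint_add x y : p_integral p x -> p_integral p y -> p_integral p (x + y).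
Proof.
move=> [m1 [c1 h1]] [m2 [c2 h2]]; exists (m1 * m2)%N; split.
  by rewrite coprimeMl c1 c2.
rewrite natrM mulrDr.
have -> : m1%:R * m2%:R * x = m2%:R * (m1%:R * x) by ring.
have -> : m1%:R * m2%:R * y = m1%:R * (m2%:R * y) by ring.
by rewrite rpredD // rpredM // rpred_nat.
Qed.
Lemma pint_mul x y : p_integral p x -> p_integral p y -> p_integral p (x * y).
Proof.
move=> [m1 [c1 h1]] [m2 [c2 h2]]; exists (m1 * m2)%N; split.
  by rewrite coprimeMl c1 c2.
have -> : (m1 * m2)%:R * (x * y) = (m1%:R * x) * (m2%:R * y) by rewrite natrM; ring.
by rewrite rpredM.
Qed.
Lemma pint_opp x : p_integral p x -> p_integral p (- x).
Proof. by move=> [m [c h]]; exists m; split => //; rewrite mulrN rpredN. Qed.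
Lemma pint_sub x y : p_integral p x -> p_integral p y -> p_integral p (x - y).
Proof. by move=> hx hy; apply: pint_add => //; apply: pint_opp. Qed.
Lemma pint_sum (I : Type) (r : seq I) (P : pred I) (F : I -> algC) :
  (forall i, P i -> p_integral p (F i)) -> p_integral p (\sum_(i <- r | P i) F i).
Proof.
move=> h; apply: (big_ind (p_integral p)) => //; first exact: (pint_nat 0).
exact: pint_add.
Qed.
Lemma pint_half : odd p -> p_integral p (2^-1).
Proof.
move=> op; exists 2%N; split; first by rewrite coprime2n.
by rewrite mulfV ?rpred1 // pnatr_eq0.
Qed.
End PInt.


Section Poly.
Variable n : nat.

Definition Sq (s : nat -> algC) : {poly algC} := \poly_(i < n.+1) (s i / (i`!)%:R).
Definition ex (x : algC) := Sq (fun i => x ^+ i).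
Definition cg (P Q : {poly algC}) := forall i, (i <= n)%N -> P`_i = Q`_i.
Definition conv (a b : nat -> algC) i :=
  \sum_(j < i.+1) ('C(i, j))%:R * a j * b (i - j)%N.

Lemma cg_refl P : cg P P. Proof. by []. Qed.
Lemma cg_sym P Q : cg P Q -> cg Q P. Proof. by move=> h i hi; rewrite h. Qed.
Lemma cg_trans P Q R : cg P Q -> cg Q R -> cg P R.
Proof. by move=> h1 h2 i hi; rewrite h1 // h2. Qed.
Lemma cg_add P Q P' Q' : cg P P' -> cg Q Q' -> cg (P + Q) (P' + Q').
Proof. by move=> h1 h2 i hi; rewrite !coefD h1 // h2. Qed.
Lemma cg_mul P Q P' Q' : cg P P' -> cg Q Q' -> cg (P * Q) (P' * Q').
Proof.
move=> h1 h2 i hi; rewrite !coefM; apply: eq_bigr => j _.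
have hj : (j <= n)%N by apply: leq_trans hi; rewrite -ltnS.
have hij : (i - j <= n)%N by apply: leq_trans hi; rewrite leq_subr.
by rewrite h1 // h2.
Qed.
Lemma cg_sum (I : Type) (r : seq I) (F G : I -> {poly algC}) :
  (forall x, cg (F x) (G x)) -> cg (\sum_(x <- r) F x) (\sum_(x <- r) G x).
Proof.
move=> h i hi; rewrite !coef_sum; apply: eq_bigr => x _; exact: h.
Qed.

Lemma fact_neq0 k : (k`!)%:R != 0 :> algC.
Proof. by rewrite pnatr_eq0 -lt0n fact_gt0. Qed.

Lemma binC i j : (j <= i)%N ->
  ('C(i, j))%:R = (i`!)%:R / ((j`!)%:R * ((i - j)`!)%:R) :> algC.
Proof.
move=> hj; rewrite -(bin_fact hj) !natrM mulfK //.
by rewrite mulf_neq0 // fact_neq0.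
Qed.

Lemma SqM a b i : (i <= n)%N -> (Sq a * Sq b)`_i = conv a b i / (i`!)%:R.
Proof.
move=> hi; rewrite coefM /conv mulr_suml; apply: eq_bigr => j _.
have hj : (j <= i)%N by rewrite -ltnS.
rewrite !coef_poly ifT; last by rewrite ltnS (leq_trans hj).
rewrite ifT; last by rewrite ltnS (leq_trans (leq_subr _ _)).
rewrite binC //; field.
by rewrite !fact_neq0.
Qed.

Lemma conv_pow x y i : conv (fun k => x ^+ k) (fun k => y ^+ k) i = (x + y) ^+ i.
Proof.
rewrite addrC exprDn /conv; apply: eq_bigr => j _.
by rewrite -mulr_natl; ring.
Qed.

Lemma ex_mul x y : cg (ex x * ex y) (ex (x + y)).
Proof.
move=> i hi; rewrite SqM // conv_pow /ex /Sq coef_poly ifT //.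
Qed.

Lemma ex0 : cg (ex 0) 1.
Proof.
move=> i hi; rewrite /ex /Sq coef_poly ifT // coefC expr0n.
by case: (i) => [|k] /=; rewrite ?divr1 ?mul0r.
Qed.
End Poly.


Lemma cg_opp n P Q : cg n P Q -> cg n (- P) (- Q).
Proof. by move=> h i hi; rewrite !coefN h. Qed.
Lemma cg_eq n P Q : P = Q -> cg n P Q.
Proof. by move=> ->. Qed.

Section Main.
Variables (n f : nat) (chi : nat -> algC) (E : nat -> algC).
Hypothesis hchi : dirichlet_char f chi.
Hypothesis fodd : odd f.
Hypothesis hE : gen_euler f chi E.

Definition V M := \sum_(1 <= a < M.+1) ((-1) ^+ a * chi a)%:P * ex n a%:R.
Definition T M := \sum_(1 <= a < M.+1) (-1) ^+ a * chi a * (a%:R) ^+ n.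

Lemma V_coef M i : (i <= n)%N ->
  (V M)`_i = (\sum_(1 <= a < M.+1) (-1) ^+ a * chi a * (a%:R) ^+ i) / (i`!)%:R.
Proof.
move=> hi; rewrite /V coef_sum mulr_suml; apply: eq_bigr => a _.
by rewrite coefCM /ex /Sq coef_poly ifT // mulrA.
Qed.

Lemma V_f : cg n (2%:P * V f) (Sq n E * (ex n f%:R + 1)).
Proof.
move=> i hi; rewrite coefCM V_coef // mulrDr mulr1 coefD SqM //.
rewrite /Sq coef_poly ifT // -mulrDl mulrA -(hE i); congr ((_ + _) / _).
by rewrite /conv; apply: eq_bigr => k _; ring.
Qed.

Lemma V_step j : cg n (V (f * j.+1))
  (V (f * j) + ((-1) ^+ j)%:P * (ex n (f * j)%:R * V f)).
Proof.
rewrite /V (@big_cat_nat _ _ _ (f * j).+1) //=; last first.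
  by rewrite ltnS leq_mul2l leqnSn orbT.
apply: cg_add; first exact: cg_refl.
have -> : (f * j).+1 = (1 + f * j)%N by rewrite add1n.
rewrite big_addn.
have -> : ((f * j.+1).+1 - f * j = f.+1)%N.
  by rewrite mulnS -addSn addnK.
rewrite mulr_sumr mulr_sumr.
apply: cg_sum => a.
have -> : ((-1) ^+ j)%:P * (ex n (f * j)%:R * (((-1) ^+ a * chi a)%:P * ex n a%:R))
  = (((-1) ^+ (a + f * j) * chi (a + f * j)%N))%:P * (ex n a%:R * ex n (f * j)%:R).
  have [_ _ hp _] := hchi.
  rewrite (_ : chi (a + f * j)%N = chi a); last first.
    by rewrite mulnC (chi_per hchi).
  rewrite exprD exprM -[(-1) ^+ f](signr_odd _ f) fodd /= expr1.
  by rewrite !polyCM; ring.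
apply: cg_mul; first exact: cg_refl.
rewrite natrD; exact/cg_sym/ex_mul.
Qed.

Lemma V_main j : cg n (2%:P * V (f * j))
  (Sq n E * (1 - ((-1) ^+ j)%:P * ex n (f * j)%:R)).
Proof.
elim: j => [|j IH].
  rewrite muln0 /V big_geq // mulr0 expr0 mul1r.
  apply: cg_sym; apply: cg_trans (_ : cg n (Sq n E * (1 - 1)) _).
    by apply: cg_mul; [exact: cg_refl | apply: cg_add; [exact: cg_refl | exact/cg_opp/ex0]].
  by rewrite subrr mulr0; exact: cg_refl.
apply: cg_trans (cg_mul (@cg_refl n 2%:P) (V_step j)) _.
rewrite mulrDr.
apply: cg_trans (_ : cg n (Sq n E * (1 - ((-1) ^+ j)%:P * ex n (f * j)%:R)
   + ((-1) ^+ j)%:P * ex n (f * j)%:R * (Sq n E * (ex n f%:R + 1))) _).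
  apply: cg_add; first exact: IH.
  have -> : 2%:P * (((-1) ^+ j)%:P * (ex n (f * j)%:R * V f)) =
     ((-1) ^+ j)%:P * ex n (f * j)%:R * (2%:P * V f) by ring.
  by apply: cg_mul; [exact: cg_refl | exact: V_f].
apply: cg_trans (_ : cg n (Sq n E * (1 + ((-1) ^+ j)%:P * (ex n (f * j)%:R * ex n f%:R))) _).
  by apply: cg_eq; ring.
apply: cg_mul; first exact: cg_refl.
rewrite exprS mulN1r polyCN mulNr opprK.
apply: cg_add; first exact: cg_refl.
apply: cg_mul; first exact: cg_refl.
by rewrite mulnS addnC natrD; exact: ex_mul.
Qed.

Lemma T_formula m : odd m ->
  2 * T (f * m) = conv E (fun k => ((f * m)%:R) ^+ k) n + E n.
Proof.
move=> om; have := V_main m (leqnn n).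
rewrite coefCM V_coef // -signr_odd om expr1 polyCN mulN1r opprK mulrDr mulr1.
rewrite coefD SqM // /Sq coef_poly ltnSn => h.
rewrite /T; set G := \sum_(_ <= _ < _) _; set C := conv _ _ _.
have nz := fact_neq0 n.
have -> : 2 * G = (2 * (G / (n`!)%:R)) * (n`!)%:R by rewrite mulrA divfK.
by rewrite h mulrDl !divfK // addrC.
Qed.
End Main.


Lemma sum_dvd (p M : nat) (g : nat -> algC) : (0 < p)%N ->
  \sum_(1 <= a < (p * M).+1 | (p %| a)%N) g a = \sum_(1 <= b < M.+1) g (p * b)%N.
Proof.
move=> p0; elim: M => [|M IH]; first by rewrite muln0 !big_geq.
rewrite big_nat_recr //= -IH (@big_cat_nat _ _ _ (p * M).+1) //=; last first.
  by rewrite ltnS leq_mul2l leqnSn orbT.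
congr (_ + _); rewrite big_mkcond big_nat_recr /=; last first.
  by rewrite mulnS; lia.
rewrite dvdn_mulr // big1_seq ?add0r // => a /andP[_].
rewrite mem_index_iota => /andP[h1 h2].
case: ifP => // /dvdnP [q hq]; exfalso.
move: h1 h2; rewrite hq [(q * p)%N]mulnC.
change ((p * M) < p * q)%N with ((p * M).+1 <= p * q)%N.
rewrite !ltn_pmul2l // => h1 h2.
lia.
Qed.

Lemma sum_split (p M : nat) (g : nat -> algC) : (0 < p)%N ->
  \sum_(1 <= a < (p * M).+1 | ~~ (p %| a)%N) g a =
  \sum_(1 <= a < (p * M).+1) g a - \sum_(1 <= b < M.+1) g (p * b)%N.
Proof.
move=> p0; rewrite -(@sum_dvd p M g p0) [X in X - _](bigID (fun a => (p %| a)%N)) /=.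
by rewrite addrC addrK.
Qed.


Section Fin.
Variables (p f n : nat) (chi : nat -> algC) (E : nat -> algC).
Hypotheses (pp : prime p) (po : odd p) (hchi : dirichlet_char f chi)
  (fodd : odd f) (hE : gen_euler f chi E).

Lemma pint_sign a : p_integral p ((-1) ^+ a).
Proof. by apply: pint_Aint; rewrite rpredX // rpredN rpred1. Qed.

Lemma pint_G k : p_integral p (\sum_(1 <= a < f.+1) (-1) ^+ a * chi a * (a%:R) ^+ k).
Proof.
apply: pint_sum => a _; apply: pint_mul; last by rewrite -natrX; apply: pint_nat.
apply: pint_mul; first exact: pint_sign.
exact/pint_Aint/(chi_Aint hchi).
Qed.

Lemma pint_E k : p_integral p (E k).
Proof.
elim/ltn_ind: k => k IH.
have h := hE k; rewrite big_ord_recr /= binn subnn expr0 mulr1 mul1r in h.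
set X := \sum_(i < k) _ in h.
set G := \sum_(_ <= _ < _) _ in h.
have -> : E k = G - 2^-1 * X.
  have h2 : E k = 2^-1 * (2 * E k) by rewrite mulKf ?pnatr_eq0.
  rewrite h2; have -> : 2 * E k = 2 * G - X by rewrite -h; ring.
  by rewrite mulrBr mulKf ?pnatr_eq0.
apply: pint_sub; first exact: pint_G.
apply: pint_mul; first exact: pint_half.
apply: pint_sum => i _; apply: pint_mul; last exact: IH.
by apply: pint_mul; [exact: pint_nat | rewrite -natrX; exact: pint_nat].
Qed.

Definition Rm m := \sum_(k < n) ('C(n, k))%:R * E k * ((f * m)%:R) ^+ (n - k).

Lemma T_sub m : odd m -> T n chi (f * m) - E n = 2^-1 * Rm m.
Proof.
move=> om; have h := T_formula n hchi fodd hE om.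
rewrite /conv big_ord_recr /= binn subnn expr0 mulr1 mul1r -/(Rm m) in h.
have h2 : T n chi (f * m) = 2^-1 * (2 * T n chi (f * m)) by rewrite mulKf ?pnatr_eq0.
have two : 2^-1 * (E n + E n) = E n.
  by rewrite -mulr2n -(mulr_natl (E n) 2) mulKf ?pnatr_eq0.
by rewrite h2 h -addrA mulrDr two addrK.
Qed.

Lemma pint_R M K : (K <= M)%N -> p_integral p (Rm (p ^ M) / (p%:R) ^+ K).
Proof.
move=> hKM; rewrite /Rm mulr_suml; apply: pint_sum => k _.
have hk : (K <= M * (n - k))%N.
  apply: leq_trans hKM _; apply: leq_pmulr; rewrite subn_gt0; exact: ltn_ord.
have pn0 : (p%:R : algC) != 0 by rewrite pnatr_eq0 -lt0n prime_gt0.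
have -> : ('C(n, k))%:R * E k * ((f * p ^ M)%:R) ^+ (n - k) / (p%:R) ^+ K =
   ('C(n, k))%:R * E k * ((f%:R) ^+ (n - k) * (p%:R) ^+ (M * (n - k) - K)).
  have e : (p%:R : algC) ^+ (M * (n - k)) = (p%:R) ^+ K * (p%:R) ^+ (M * (n - k) - K).
    by rewrite -exprD subnKC.
  rewrite natrM exprMn natrX -exprM e.
  rewrite [(p%:R : algC) ^+ K * _]mulrC !mulrA mulfK // expf_neq0 //.
apply: pint_mul; first apply: pint_mul.
- exact: pint_nat.
- exact: pint_E.
- by rewrite -!natrX -natrM; exact: pint_nat.
Qed.
End Fin.

Unset Implicit Arguments.
Theorem corollary2p2 (p f : nat) (chi : nat -> algC) (E : nat -> algC) (n : nat) :
  prime p -> odd p -> (0 < f)%N -> odd f ->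
  primitive_char f chi -> gen_euler f chi E ->
  padic_lim p
    (fun N : nat => \sum_(1 <= a < (f * p ^ N).+1 | ~~ (p %| a)%N)
                      (-1) ^+ a * chi a * (a%:R) ^+ n)
    ((1 - chi p * (p%:R) ^+ n) * E n).
Proof.
move=> pp po f0 fodd [hchi _] hE K; exists K.+1 => N hN.
case: N hN => [|N] // hN; rewrite ltnS in hN.
have p0 : (0 < p)%N by exact: prime_gt0.
have [_ hm _ _] := hchi.
rewrite expnS mulnCA sum_split //.
have -> : \sum_(1 <= b < (f * p ^ N).+1)
    (-1) ^+ (p * b) * chi (p * b)%N * ((p * b)%N%:R) ^+ n =
    chi p * (p%:R) ^+ n * T n chi (f * p ^ N).
  rewrite /T mulr_sumr; apply: eq_bigr => b _.
  rewrite exprM -[(-1) ^+ p](signr_odd _ p) po expr1 hm natrM exprMn; ring.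
rewrite (_ : (p * (f * p ^ N) = f * p ^ N.+1)%N); last by rewrite expnS mulnCA.
change (\sum_(1 <= a < (f * p ^ N.+1).+1) _) with (T n chi (f * p ^ N.+1)).
have oN : forall M, odd (p ^ M) by move=> M; rewrite oddX po orbT.
have e : T n chi (f * p ^ N.+1) - chi p * p%:R ^+ n * T n chi (f * p ^ N)
   - (1 - chi p * p%:R ^+ n) * E n
   = (T n chi (f * p ^ N.+1) - E n) - chi p * p%:R ^+ n * (T n chi (f * p ^ N) - E n)
  by ring.
rewrite e !(T_sub n hchi fodd hE) //.
have -> : (2^-1 * Rm f n E (p ^ N.+1) - chi p * p%:R ^+ n * (2^-1 * Rm f n E (p ^ N)))
   / p%:R ^+ K = 2^-1 * (Rm f n E (p ^ N.+1) / p%:R ^+ K)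
     - chi p * p%:R ^+ n * 2^-1 * (Rm f n E (p ^ N) / p%:R ^+ K) by ring.
apply: pint_sub; apply: pint_mul.
- exact: pint_half.
- by apply: (pint_R n pp po hchi hE); apply: leq_trans hN _.
- apply: pint_mul; last exact: pint_half.
  apply: pint_mul; first exact/pint_Aint/(chi_Aint hchi).
  by rewrite -natrX; exact: pint_nat.
- exact: (pint_R n pp po hchi hE).
Qed.
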